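(* Let $\Gamma$ be a metrized graph with $4$ vertices. Then $$3\,y(\Gamma) \leq Kf(\Gamma) \leq 4\, y(\Gamma).$$
   Context: A metrized graph $\Gamma$ is a finite connected graph (multiple edges and self-loops allowed) each of whose edges is identified with a closed segment of positive length, with a finite nonempty vertex set $V(\Gamma)$ containing every point of valence $\neq2$; $L_i$ is the length of $e_i$, $r$ the effective resistance (edges as resistors of resistance equal to length). $Kf(\Gamma)=\frac12\sum_{p,q\in V(\Gamma)}r(p,q)$. For an edge $e_i$ with end points $p_i,q_i$: if $\Gamma-e_i$ (interior deleted) is connected, $R_i$ is the effective resistance between $p_i,q_i$ in $\Gamma-e_i$, $R_{a_i,p}=\hat j_{p_i}(p,q_i)$, $R_{b_i,p}=\hat j_{q_i}(p,p_i)$ with $\hat j_z(x,y)$ the voltage function of $\Gamma-e_i$ (potential at $x$ when unit current enters at $y$ and exits at $z$, potential $0$ at $z$); if $e_i$ is a bridge, $R_{a_i,p}=0,R_{b_i,p}=R_i$ for $p$ in the component of $\Gamma-e_i$ containing $p_i$ and $R_{a_i,p}=R_i,R_{b_i,p}=0$ otherwise, with every expression in $R_i$ interpreted as its limit as $R_i\to\infty$; for a self-loop $R_i=0$. For a fixed vertex $p$ (independent of choice), $y(\Gamma)=\frac14\sum_{e_i}\frac{L_iR_i^2}{(L_i+R_i)^2}+\frac34\sum_{e_i}\frac{L_i(R_{a_i,p}-R_{b_i,p})^2}{(L_i+R_i)^2}$. *)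

(* Defs.v *)
(* Metrized graphs are modelled combinatorially: a vertex set
   'I_n, a finite family of edges k : 'I_(nedges G), each with end points
   esrc k, edst k (self-loops and multiple edges allowed) and length elen k.
   Resistances between vertices of the metrized graph are those of the
   electrical network with resistor elen k on edge k. *)
From HB Require Import structures.
From mathcomp Require Import all_boot all_order all_algebra.
Set Implicit Arguments. Unset Strict Implicit. Unset Printing Implicit Defensive.
Import Order.TTheory GRing.Theory Num.Theory.
Local Open Scope ring_scope.

Record mgraph (R : Type) (n : nat) := MGraph {
  nedges : nat;
  esrc : 'I_nedges -> 'I_n;
  edst : 'I_nedges -> 'I_n;
  elen : 'I_nedges -> R }.
Arguments nedges {R n} m : rename.
Arguments esrc {R n} m _ : rename.
Arguments edst {R n} m _ : rename.
Arguments elen {R n} m _ : rename.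

Section MetrizedGraph.
Variables (R : realFieldType) (n : nat) (G : mgraph R n).
Local Notation E := 'I_(nedges G).

Definition inc (x : 'I_n) (k : E) : R :=
  (x == esrc G k)%:R - (x == edst G k)%:R.

Definition lap (S : pred E) : 'M[R]_n :=
  \matrix_(x, y) \sum_(k | S k) (elen G k)^-1 * inc x k * inc y k.

Definition adj (S : pred E) : rel 'I_n := fun x y =>
  [exists k : E, S k && (((esrc G k == x) && (edst G k == y))
                      || ((esrc G k == y) && (edst G k == x)))].

Definition connectedb (S : pred E) : bool :=
  [forall x, forall y, connect (adj S) x y].

(* Voltage function j_z(x,y) of the (connected) network S: the potential at x
   when unit current enters at y and exits at z, potential 0 at z.  It is the
   x-coordinate of the unique v with  lap S *m v = e_y - e_z  and  v z = 0,
   i.e. the solution of (lap S + e_z e_z^T) v = e_y - e_z. *)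
Definition volt (S : pred E) (z x y : 'I_n) : R :=
  let M := invmx (lap S + delta_mx z z) in M x y - M x z.

Definition reff (S : pred E) (x y : 'I_n) : R := volt S y x x.

Definition all_edges : pred E := predT.
Definition del (i : E) : pred E := fun k => k != i.

Definition Kf : R :=
  2^-1 * \sum_(p : 'I_n) \sum_(q : 'I_n) reff all_edges p q.

Definition is_bridge (i : E) : bool := ~~ connectedb (del i).

Definition Ri (i : E) : R := reff (del i) (esrc G i) (edst G i).
Definition Rai (i : E) (p : 'I_n) : R := volt (del i) (esrc G i) p (edst G i).
Definition Rbi (i : E) (p : 'I_n) : R := volt (del i) (edst G i) p (esrc G i).

(* For a bridge, both summands are replaced by their limit L_i as R_i -> oo
   (with R_a = 0, R_b = R_i or R_a = R_i, R_b = 0). *)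
Definition yterm1 (i : E) : R :=
  if is_bridge i then elen G i
  else elen G i * (Ri i) ^+ 2 / (elen G i + Ri i) ^+ 2.

Definition yterm2 (i : E) (p : 'I_n) : R :=
  if is_bridge i then elen G i
  else elen G i * (Rai i p - Rbi i p) ^+ 2 / (elen G i + Ri i) ^+ 2.

Definition y_inv (p : 'I_n) : R :=
  4^-1 * \sum_(i : E) yterm1 i + 3 / 4 * \sum_(i : E) yterm2 i p.

End MetrizedGraph.

Arguments inc {R n} G.
Arguments lap {R n} G.
Arguments adj {R n} G.
Arguments connectedb {R n} G.
Arguments volt {R n} G.
Arguments reff {R n} G.
Arguments all_edges {R n} G.
Arguments del {R n} G.
Arguments Kf {R n} G.
Arguments is_bridge {R n} G.
Arguments Ri {R n} G.
Arguments Rai {R n} G.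
Arguments Rbi {R n} G.
Arguments yterm1 {R n} G.
Arguments yterm2 {R n} G.
Arguments y_inv {R n} G.

(* Main.v *)
Require Import Defs.
From HB Require Import structures.
From mathcomp Require Import all_boot all_order all_algebra.
From mathcomp Require Import ring lra.
Set Implicit Arguments. Unset Strict Implicit. Unset Printing Implicit Defensive.
Import Order.TTheory GRing.Theory Num.Theory.
Local Open Scope ring_scope.

Section S.
Variables (R : realFieldType) (n : nat) (G : mgraph R n).
Hypothesis Lpos : forall k, 0 < elen G k.
Local Notation E := 'I_(nedges G).
Definition cc (k : E) := (elen G k)^-1.
Definition du (k : E) (v : 'I_n -> R) := v (esrc G k) - v (edst G k).
Definition Lv (S : pred E) (v : 'I_n -> R) (x : 'I_n) := \sum_y lap G S x y * v y.

Lemma cc_gt0 k : 0 < cc k.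
Proof. by rewrite /cc invr_gt0. Qed.

Lemma sum_delta (a : 'I_n) (v : 'I_n -> R) : \sum_x (x == a)%:R * v x = v a.
Proof.
rewrite (bigD1 a) //= eqxx mul1r big1 ?addr0 // => x /negbTE ->; by rewrite mul0r.
Qed.

Lemma inc_sum k v : \sum_x inc G x k * v x = du k v.
Proof.
rewrite /inc /du -(sum_delta (esrc G k)) -(sum_delta (edst G k)) -sumrB.
by apply: eq_bigr => x _; rewrite mulrBl.
Qed.

Lemma LvE S v x : Lv S v x = \sum_(k | S k) cc k * inc G x k * du k v.
Proof.
rewrite /Lv. under eq_bigr => y _ do rewrite mxE mulr_suml. 
rewrite exchange_big /=. apply: eq_bigr => k Sk.
rewrite -inc_sum big_distrr. apply: eq_bigr => y _ /=. by rewrite /cc -!mulrA.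
Qed.

Lemma QF S f v : \sum_x f x * Lv S v x = \sum_(k | S k) cc k * du k f * du k v.
Proof.
under eq_bigr do rewrite LvE big_distrr.
rewrite exchange_big /=. apply: eq_bigr => k Sk.
rewrite -(inc_sum k f) mulr_sumr mulr_suml. apply: eq_bigr => y _ /=. ring.
Qed.

Lemma QF_sym S f v : \sum_x f x * Lv S v x = \sum_x v x * Lv S f x.
Proof. rewrite !QF; apply: eq_bigr => k _; ring. Qed.

Lemma Lv_lin S (I : finType) (a : I -> R) (w : I -> 'I_n -> R) x :
  Lv S (fun y => \sum_i a i * w i y) x = \sum_i a i * Lv S (w i) x.
Proof.
rewrite /Lv. under eq_bigr do rewrite big_distrr.
rewrite exchange_big /=. apply: eq_bigr => i _.
rewrite big_distrr; apply: eq_bigr => y _ /=; ring.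
Qed.

Lemma Lv_add S v w x : Lv S (fun y => v y + w y) x = Lv S v x + Lv S w x.
Proof. rewrite /Lv -big_split; apply: eq_bigr => y _ /=; ring. Qed.
Lemma Lv_scale S a v x : Lv S (fun y => a * v y) x = a * Lv S v x.
Proof. rewrite /Lv big_distrr; apply: eq_bigr => y _ /=; ring. Qed.
Lemma Lv_scaler S a v x : Lv S (fun y => v y * a) x = Lv S v x * a.
Proof. rewrite /Lv big_distrl; apply: eq_bigr => y _ /=; ring. Qed.
Lemma Lv_opp S v x : Lv S (fun y => - v y) x = - Lv S v x.
Proof. rewrite /Lv -sumrN; apply: eq_bigr => y _ /=; ring. Qed.
Lemma Lv_cst S a x : Lv S (fun _ => a) x = 0.
Proof. rewrite LvE big1 // => k _; rewrite /du subrr; ring. Qed.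
Lemma Lv_sub S v w x : Lv S (fun y => v y - w y) x = Lv S v x - Lv S w x.
Proof. rewrite /Lv -sumrB; apply: eq_bigr => y _ /=; ring. Qed.

Lemma sum_Lv S v : \sum_x Lv S v x = 0.
Proof.
have := QF S (fun _ => 1) v. under eq_bigr do rewrite mul1r. move=> ->.
by apply: big1 => k _; rewrite /du subrr mulr0 mul0r.
Qed.


Lemma adj_sym S x y : adj G S x y = adj G S y x.
Proof.
rewrite /adj; apply/existsP/existsP => -[k /andP[Sk H]]; exists k;
  by rewrite Sk /= orbC.
Qed.

Lemma kernel_const S v : connectedb G S -> (forall x, Lv S v x = 0) ->
  forall x y, v x = v y.
Proof.
move=> /forallP Hc H0 x y.
have Q := QF S v v.
have Z : \sum_(k | S k) cc k * du k v * du k v = 0.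
  by rewrite -Q big1 // => z _; rewrite H0 mulr0.
have Hd : forall k, S k -> du k v = 0.
  move=> k Sk.
  have Hnn : forall i, S i -> 0 <= cc i * du i v * du i v.
    move=> i _; rewrite -mulrA; apply: mulr_ge0; [apply: ltW; apply: cc_gt0 | rewrite -expr2; apply: sqr_ge0].
  move: (@psumr_eq0P _ _ S _ Hnn Z k Sk) => /eqP.
  rewrite -mulrA mulf_eq0 (negbTE (lt0r_neq0 (cc_gt0 k))) /= mulf_eq0 orbb => /eqP; done.
have Cl : closed (adj G S) [pred z | v z == v x].
  move=> a b /existsP [k /andP [Sk /orP [/andP [/eqP ea /eqP eb] | /andP [/eqP ea /eqP eb]]]];
    have := Hd k Sk; rewrite /du ea eb !inE => /eqP; rewrite subr_eq0 => /eqP -> //.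
move: (Hc x) => /forallP /(_ y) Hxy.
have := closed_connect Cl Hxy. rewrite !inE eqxx => /esym/eqP; done.
Qed.

Lemma sum_deltac (a : 'I_n) (c : R) : \sum_x (x == a)%:R * c = c.
Proof. exact: (sum_delta a (fun _ => c)). Qed.

Lemma sum_delta1 (a : 'I_n) : \sum_x (x == a)%:R = 1 :> R.
Proof. by rewrite (eq_bigr (fun x => (x == a)%:R * 1)) ?sum_deltac // => x _; rewrite mulr1. Qed.

Lemma Av S z v k :
  \sum_y (lap G S + delta_mx z z) k y * v y = Lv S v k + (k == z)%:R * v z.
Proof.
rewrite /Lv. transitivity (\sum_y lap G S k y * v y +
   \sum_y ((k == z) && (y == z))%:R * v y).
  by rewrite -big_split; apply: eq_bigr => y _; rewrite !mxE mulrDl.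
congr (_ + _).
rewrite (bigD1 z) //= eqxx andbT big1 ?addr0 // => y /negbTE ->.
by rewrite andbF mul0r.
Qed.

Lemma A_sym S z x y :
  (lap G S + delta_mx z z) x y = (lap G S + delta_mx z z) y x.
Proof.
rewrite !mxE andbC; congr (_ + _); apply: eq_bigr => k _; ring.
Qed.

Lemma sum_Av S z v : \sum_k (Lv S v k + (k == z)%:R * v z) = v z.
Proof. by rewrite big_split /= sum_Lv add0r sum_deltac. Qed.

Lemma A_unit S z : connectedb G S -> (lap G S + delta_mx z z) \in unitmx.
Proof.
move=> Hc. rewrite -row_free_unit -kermx_eq0. apply/eqP/row_matrixP => i.
rewrite row0.
set u := row i (kermx _).
have Hu : u *m (lap G S + delta_mx z z) = 0 by rewrite /u -row_mul mulmx_ker row0.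
pose v y := u 0 y.
have Hv : forall k, Lv S v k + (k == z)%:R * v z = 0.
  move=> k. rewrite -Av. have := congr1 (fun M : 'M[R]_(1,n) => M 0 k) Hu; rewrite !mxE => Hk0.
  rewrite -[RHS]Hk0. by apply: eq_bigr => y _; rewrite A_sym mulrC.
have vz : v z = 0 by rewrite -(sum_Av S z v) big1.
have HL : forall k, Lv S v k = 0 by move=> k; have := Hv k; rewrite vz mulr0 addr0.
apply/rowP => j; rewrite [RHS]mxE.
exact: etrans (kernel_const Hc HL j z) vz.
Qed.

Lemma volt_eq S z y : connectedb G S ->
  (forall k, Lv S (fun x => volt G S z x y) k = (k == y)%:R - (k == z)%:R)
  /\ volt G S z z y = 0.
Proof.
move=> Hc. have H := mulmxV (A_unit z Hc).
have Hk : forall k, Lv S (fun x => volt G S z x y) k + (k == z)%:R * volt G S z z y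
   = (k == y)%:R - (k == z)%:R.
  move=> k. rewrite -(Av _ _ (fun x => volt G S z x y)).
  have := congr1 (fun M : 'M[R]_n => M k y - M k z) H. rewrite !mxE => <-.
  rewrite -sumrB; apply: eq_bigr => x _; rewrite /volt /=. by rewrite mulrBr.
have vz : volt G S z z y = 0.
  rewrite -(sum_Av S z (fun x => volt G S z x y)).
  under eq_bigr do rewrite Hk.
  by rewrite sumrB !sum_delta1 subrr.
by split=> // k; have := Hk k; rewrite vz mulr0 addr0.
Qed.

Lemma volt_uniq S z y v : connectedb G S ->
  (forall k, Lv S v k = (k == y)%:R - (k == z)%:R) -> v z = 0 ->
  forall x, volt G S z x y = v x.
Proof.
move=> Hc Hv vz x. have [H1 H2] := volt_eq z y Hc.
have K : forall k, Lv S (fun x => volt G S z x y - v x) k = 0.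
  by move=> k; rewrite Lv_sub H1 Hv subrr.
have := kernel_const Hc K x z. rewrite H2 vz subrr => /eqP; rewrite subr_eq0 => /eqP.
done.
Qed.

Hypothesis Hc : connectedb G (all_edges G).
Definition pot (e : E) x := volt G (all_edges G) (edst G e) x (esrc G e).

Lemma pot_eq e : (forall k, Lv (all_edges G) (pot e) k = inc G k e) /\ pot e (edst G e) = 0.
Proof. by have [H1 H2] := volt_eq (edst G e) (esrc G e) Hc. Qed.

Lemma Lv_all_split e v k :
  Lv (all_edges G) v k = Lv (del G e) v k + cc e * inc G k e * du e v.
Proof.
rewrite !LvE (bigD1 e) //= addrC; congr (_ + _).
Qed.

Lemma connect_del_sym e x y : connect (adj G (del G e)) x y -> connect (adj G (del G e)) y x.
Proof.
by rewrite sym_connect_sym // => u w; rewrite adj_sym.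
Qed.

Lemma bridge_sep e : is_bridge G e ->
  ~~ connect (adj G (del G e)) (esrc G e) (edst G e).
Proof.
move=> Hb; apply/negP => Cab; move/negP: Hb; apply.
apply/forallP => x; apply/forallP => y.
move: Hc => /forallP/(_ x)/forallP/(_ y); apply: connect_sub => x' y'.
move=> /existsP [k /andP [_ H]].
case: (eqVneq k e) => [ke|kne].
  subst k. case/orP: H => /andP [/eqP <- /eqP <-] //. exact: connect_del_sym.
apply: connect1; apply/existsP; exists k; by rewrite /del kne.
Qed.

Lemma cc_elen e : cc e * elen G e = 1.
Proof. by rewrite /cc mulVf // lt0r_neq0. Qed.

Lemma pot_bridge e : is_bridge G e -> forall x,
  pot e x = elen G e * (connect (adj G (del G e)) (esrc G e) x)%:R.
Proof.
move=> Hb. have nab := bridge_sep Hb.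
set C := fun x => connect (adj G (del G e)) (esrc G e) x.
apply: volt_uniq => //; last by rewrite /C (negbTE nab) mulr0.
move=> k. rewrite LvE (bigD1 e) //= big1 ?addr0.
  rewrite /du /C connect0 (negbTE nab) /=.
  rewrite mulr1 mulr0 subr0 /inc -mulrA mulrCA cc_elen mulr1 //.
move=> k' /= nke. rewrite /du.
have Hadj : adj G (del G e) (esrc G k') (edst G k').
  by apply/existsP; exists k'; rewrite /del nke !eqxx.
suff -> : connect (adj G (del G e)) (esrc G e) (esrc G k') =
          connect (adj G (del G e)) (esrc G e) (edst G k') by rewrite subrr mulr0.
apply/idP/idP => H.
  exact: connect_trans H (connect1 Hadj).
apply: connect_trans H (connect1 _). by rewrite adj_sym.
Qed.

Lemma yterm_bridge e p : is_bridge G e ->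
  yterm1 G e = cc e * (pot e (esrc G e)) ^+ 2 /\
  yterm2 G e p = cc e * (pot e (esrc G e) - 2 * pot e p) ^+ 2.
Proof.
move=> Hb. rewrite /yterm1 /yterm2 Hb !pot_bridge // connect0 mulr1.
have h : elen G e != 0 by rewrite lt0r_neq0.
split; first by rewrite /cc; field.
by case: (connect _ _ _); rewrite /cc /=; field.
Qed.

Lemma yterm_nonbridge e p : ~~ is_bridge G e ->
  yterm1 G e = cc e * (pot e (esrc G e)) ^+ 2 /\
  yterm2 G e p = cc e * (pot e (esrc G e) - 2 * pot e p) ^+ 2.
Proof.
move=> Hb. have Hc' : connectedb G (del G e) by move: Hb; rewrite /is_bridge negbK.
set a := esrc G e; set b := edst G e.
set v' := fun x => volt G (del G e) b x a.
have [H1 H2] := volt_eq b a Hc'.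
have HR : Ri G e = v' a by [].
have v'b : v' b = 0 := H2.
have Rge0 : 0 <= v' a.
  have : \sum_x v' x * Lv (del G e) v' x = v' a.
    under eq_bigr do rewrite H1.
    rewrite -[RHS]subr0 -[X in _ - X]H2 -/(du e v') -inc_sum.
    by apply: eq_bigr => x _; rewrite mulrC.
  move=> <-; rewrite QF; apply: sumr_ge0 => k _.
  rewrite -mulrA; apply: mulr_ge0; [apply: ltW; apply: cc_gt0 | rewrite -expr2; apply: sqr_ge0].
set s := 1 + cc e * v' a.
have s_gt0 : 0 < s by rewrite /s ltr_wpDr // mulr_ge0 // ltW // cc_gt0.
have Hpot : forall x, pot e x = v' x / s.
  apply: volt_uniq => //; last by rewrite /= v'b mul0r.
  move=> k. rewrite (Lv_all_split e) Lv_scaler H1.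
  have -> : du e (fun y => v' y / s) = v' a / s by rewrite /du /= -/a -/b v'b mul0r subr0.
  rewrite /s /inc -/a -/b. field. by rewrite -/s lt0r_neq0.
have Hra : forall x, Rai G e x = v' a - v' x.
  move=> x. rewrite /Rai -/a -/b. apply: (volt_uniq (v := fun x => v' a - v' x)) => //; last by rewrite subrr.
  move=> k. rewrite Lv_sub Lv_cst H1 /inc -/a -/b. ring.
have Hrb : forall x, Rbi G e x = v' x by [].
rewrite /yterm1 /yterm2 (negbTE Hb) HR Hra Hrb !Hpot.
have h : elen G e != 0 by rewrite lt0r_neq0.
have h2 : elen G e + v' a != 0 by rewrite lt0r_neq0 // ltr_pwDl.
move: (lt0r_neq0 s_gt0); rewrite /s /cc => hs.
by split; field; rewrite h h2.
Qed.

Lemma yterm_pot e p :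
  yterm1 G e = cc e * (pot e (esrc G e)) ^+ 2 /\
  yterm2 G e p = cc e * (pot e (esrc G e) - 2 * pot e p) ^+ 2.
Proof.
case Hb: (is_bridge G e); first exact: yterm_bridge.
by apply: yterm_nonbridge; rewrite Hb.
Qed.

Hypothesis n_gt0 : (0 < n)%N.
Definition N : R := n%:R.
Lemma N_neq0 : N != 0.
Proof. by rewrite /N pnatr_eq0 -lt0n. Qed.

Definition w (e : E) x := pot e x - (\sum_y pot e y) / N.

Lemma sum_cst (c : R) : \sum_(x : 'I_n) c = N * c.
Proof. by rewrite sumr_const card_ord /N mulr_natl. Qed.

Lemma w_Lv e k : Lv (all_edges G) (w e) k = inc G k e.
Proof. by rewrite /w Lv_sub Lv_cst subr0; case: (pot_eq e) => ->. Qed.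

Lemma w_sum e : \sum_x w e x = 0.
Proof.
rewrite /w sumrB sum_cst mulrCA mulfV ?mulr1 ?subrr //; exact: N_neq0.
Qed.

Lemma w_diff e p q : w e p - w e q = pot e p - pot e q.
Proof. rewrite /w; ring. Qed.

Lemma du_w_inc e v : du e v = \sum_x v x * Lv (all_edges G) (w e) x.
Proof.
rewrite -inc_sum; apply: eq_bigr => x _; by rewrite w_Lv mulrC.
Qed.

Lemma recip e f : du e (w f) = du f (w e).
Proof. by rewrite du_w_inc QF_sym -du_w_inc. Qed.

Lemma HL g k : \sum_e cc e * w e k * du e g = g k - (\sum_x g x) / N.
Proof.
pose h x := \sum_e (cc e * du e g) * w e x.
have Lh : forall j, Lv (all_edges G) (fun x => h x - g x) j = 0.
  move=> j. rewrite Lv_sub /h Lv_lin (LvE _ g). apply/eqP; rewrite subr_eq0; apply/eqP.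
  apply: eq_bigr => e _. rewrite w_Lv; ring.
have sh : \sum_x h x = 0.
  rewrite /h exchange_big big1 // => e _. by rewrite -mulr_sumr w_sum mulr0.
have Hk := kernel_const Hc Lh.
have : \sum_x (h x - g x) = N * (h k - g k).
  rewrite -sum_cst; apply: eq_bigr => x _; exact: Hk.
rewrite sumrB sh add0r => H.
have -> : \sum_e cc e * w e k * du e g = h k by apply: eq_bigr => e _; ring.
have hN := N_neq0.
apply: (mulfI hN). rewrite mulrBr mulrCA mulfV // mulr1.
rewrite (_ : N * h k = N * (h k - g k) + N * g k); last by ring.
rewrite -H; ring.
Qed.

Lemma sum_delta_r (a : 'I_n) (v : 'I_n -> R) : \sum_x v x * (x == a)%:R = v a.
Proof. rewrite -(sum_delta a v); apply: eq_bigr => x _; exact: mulrC. Qed.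

Lemma du_w e v : du e v = \sum_x w e x * Lv (all_edges G) v x.
Proof. by rewrite du_w_inc QF_sym. Qed.

Lemma reff_w p q : reff G (all_edges G) p q = \sum_e cc e * (w e p - w e q) ^+ 2.
Proof.
have [H1 H2] := volt_eq q p Hc.
set phi := fun x => volt G (all_edges G) q x p.
have -> : reff G (all_edges G) p q = phi p by [].
have : \sum_x phi x * Lv (all_edges G) phi x = phi p.
  under eq_bigr do rewrite H1 mulrBr.
  by rewrite sumrB !sum_delta_r /phi H2 subr0.
move=> <-. rewrite QF; apply: eq_bigr => e _.
rewrite du_w. under eq_bigr do rewrite H1 mulrBr.
rewrite sumrB !sum_delta_r; ring.
Qed.

Lemma sum_sq_diff (f : 'I_n -> R) :
  \sum_p \sum_q (f p - f q) ^+ 2 = 2 * N * \sum_x f x ^+ 2 - 2 * (\sum_x f x) ^+ 2.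
Proof.
have E1 : forall p, \sum_q (f p - f q) ^+ 2 =
   N * f p ^+ 2 - 2 * f p * \sum_x f x + \sum_x f x ^+ 2.
  move=> p. rewrite -sum_cst mulr_sumr -sumrB -big_split /=.
  by apply: eq_bigr => q _; ring.
under eq_bigr do rewrite E1.
rewrite big_split sumrB /= -mulr_sumr -mulr_suml -mulr_sumr sum_cst. ring.
Qed.

Lemma Kf_w : Kf G = N * \sum_e cc e * \sum_x w e x ^+ 2.
Proof.
rewrite /Kf.
under eq_bigr => p _ do under eq_bigr => q _ do rewrite reff_w.
under eq_bigr => p _ do rewrite exchange_big.
rewrite exchange_big mulr_sumr mulr_sumr; apply: eq_bigr => e _.
under eq_bigr => p _ do rewrite -mulr_sumr.
rewrite -mulr_sumr sum_sq_diff w_sum.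
have h2 : (2 : R) != 0 by rewrite pnatr_eq0.
by field.
Qed.

Lemma pot_w e x : pot e x = w e x - w e (edst G e).
Proof. by rewrite w_diff; case: (pot_eq e) => _ ->; rewrite subr0. Qed.

Lemma duD e : du e (fun x => \sum_f cc f * w f x ^+ 2) = w e (esrc G e) + w e (edst G e).
Proof.
transitivity (\sum_f cc f * w f (esrc G e) * du f (w e) +
              \sum_f cc f * w f (edst G e) * du f (w e)).
  rewrite [LHS]/du -sumrB -big_split /=; apply: eq_bigr => f _.
  rewrite -recip /du; ring.
by rewrite !HL w_sum mul0r !subr0.
Qed.

Lemma key p : \sum_e cc e * (w e (esrc G e) + w e (edst G e)) * w e p =
  \sum_e cc e * w e p ^+ 2 - (\sum_e cc e * \sum_x w e x ^+ 2) / N.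
Proof.
have := HL (fun x => \sum_f cc f * w f x ^+ 2) p.
under eq_bigr do rewrite duD.
move=> H.
rewrite (eq_bigr (fun e => cc e * w e p * (w e (esrc G e) + w e (edst G e)))); last first.
  by move=> e _; ring.
rewrite H. congr (_ - _ / N).
rewrite exchange_big /=; apply: eq_bigr => e _; by rewrite mulr_sumr.
Qed.

Definition sa e := w e (esrc G e) + w e (edst G e).
Definition sd e := w e (esrc G e) - w e (edst G e).
Definition S2 e := \sum_x w e x ^+ 2.

Lemma y_w p : y_inv G p =
  \sum_e cc e * (sd e ^+ 2 / 4 + 3 / 4 * (sa e ^+ 2 + 4 / N * S2 e)).
Proof.
have Y1 : \sum_e yterm1 G e = \sum_e cc e * sd e ^+ 2.
  apply: eq_bigr => e _; case: (yterm_pot e p) => -> _; by rewrite pot_w.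
have Y2 : \sum_e yterm2 G e p = \sum_e cc e * (sa e - 2 * w e p) ^+ 2.
  apply: eq_bigr => e _; case: (yterm_pot e p) => _ ->; rewrite !pot_w /sa; congr (_ * _); ring.
have E : \sum_e cc e * (sa e - 2 * w e p) ^+ 2 =
   \sum_e cc e * sa e ^+ 2 - 4 * \sum_e cc e * sa e * w e p + 4 * \sum_e cc e * w e p ^+ 2.
  rewrite !mulr_sumr -sumrB -big_split /=; apply: eq_bigr => e _; ring.
rewrite /y_inv Y1 Y2 E key.
rewrite [RHS](_ : _ = 4^-1 * \sum_e cc e * sd e ^+ 2 + 3/4 * \sum_e cc e * sa e ^+ 2
   + 3 / N * \sum_e cc e * S2 e); last first.
  rewrite !mulr_sumr -!big_split /=; apply: eq_bigr => e _.
  have h4 : (4 : R) != 0 by rewrite pnatr_eq0.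
  have hN := N_neq0. by field.
rewrite /S2. have h4 : (4 : R) != 0 by rewrite pnatr_eq0.
have hN := N_neq0. by field.
Qed.

Lemma exists_max (v : 'I_n -> R) (x0 : 'I_n) : exists k, forall y, v y <= v k.
Proof.
have : forall s : seq 'I_n, exists k, forall y, y \in x0 :: s -> v y <= v k.
  elim=> [|a s [k Hk]].
    by exists x0 => y; rewrite inE => /eqP ->.
  case: (lerP (v a) (v k)) => h.
    exists k => y; rewrite !inE => /orP [/eqP -> | /orP [/eqP -> //|]].
      by apply: Hk; rewrite inE eqxx.
    by move=> ys; apply: Hk; rewrite inE ys orbT.
  exists a => y; rewrite !inE => /orP [/eqP -> | /orP [/eqP -> //|]].
    by apply: le_trans (ltW h); apply: Hk; rewrite inE eqxx.
  by move=> ys; apply: le_trans (ltW h); apply: Hk; rewrite inE ys orbT.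
move=> /(_ (enum 'I_n)) [k Hk]; exists k => y; apply: Hk.
by rewrite inE mem_enum orbT.
Qed.

Lemma term_ge0 (v : 'I_n -> R) x k : (forall y, v y <= v x) ->
  0 <= cc k * inc G x k * du k v.
Proof.
move=> Hm. rewrite -mulrA; apply: mulr_ge0; first exact: ltW (cc_gt0 k).
rewrite /inc /du.
case: (eqVneq x (esrc G k)) => [<-|ns]; case: (eqVneq x (edst G k)) => [<-|nd] /=.
- by rewrite subrr mul0r.
- by rewrite subr0 mul1r subr_ge0.
- by rewrite sub0r mulNr mul1r oppr_ge0 subr_le0.
- by rewrite subrr mul0r.
Qed.

Lemma MP (v : 'I_n -> R) a :
  (forall k, k != a -> Lv (all_edges G) v k <= 0) -> forall k, v k <= v a.
Proof.
move=> HL0 k.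
have [k0 Hk0] := exists_max v a.
case: (lerP (v k0) (v a)) => h; first exact: le_trans (Hk0 k) h.
exfalso.
have step : forall x y, v x = v k0 -> adj G (all_edges G) x y -> v y = v k0.
  move=> x y vx Hxy.
  have Hm : forall y, v y <= v x by move=> y'; rewrite vx.
  have xa : x != a by apply/eqP => xa; move: h; rewrite -xa vx ltxx.
  have Z : \sum_(k | all_edges G k) cc k * inc G x k * du k v = 0.
    apply/eqP; rewrite eq_le -LvE HL0 //=.
    rewrite LvE; apply: sumr_ge0 => k' _; exact: term_ge0.
  have Zk := psumr_eq0P (fun k' _ => term_ge0 k' Hm) Z.
  move: Hxy => /existsP [k' /andP [_ /orP [/andP [/eqP es /eqP ed] | /andP [/eqP es /eqP ed]]]].
  - case: (eqVneq x y) => [<- //|nxy].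
    have := Zk k' isT. rewrite /inc /du es ed eqxx (negbTE nxy) subr0 mulr1 => /eqP.
    rewrite mulf_eq0 (negbTE (lt0r_neq0 (cc_gt0 k'))) /= subr_eq0 vx => /eqP.
    by move=> <-.
  - case: (eqVneq x y) => [<- //|nxy].
    have := Zk k' isT. rewrite /inc /du es ed eqxx (negbTE nxy) sub0r mulrN1 => /eqP.
    rewrite mulNr oppr_eq0 mulf_eq0 (negbTE (lt0r_neq0 (cc_gt0 k'))) /= subr_eq0 vx => /eqP.
    done.
have Cl : closed (adj G (all_edges G)) [pred z | v z == v k0].
  move=> x y Hxy; rewrite !inE; apply/eqP/eqP => H.
    exact: step Hxy.
  by apply: step H _; rewrite adj_sym.
move: Hc => /forallP/(_ k0)/forallP/(_ a) Hka.
have := closed_connect Cl Hka. rewrite !inE eqxx => /esym/eqP ha.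
by move: h; rewrite ha ltxx.
Qed.

Lemma w_max e k : w e k <= w e (esrc G e).
Proof.
apply: MP => k' nk. rewrite w_Lv /inc (negbTE nk) sub0r oppr_le0; exact: ler0n.
Qed.

Lemma w_min e k : w e (edst G e) <= w e k.
Proof.
rewrite -lerN2. apply: (MP (v := fun x => - w e x)) => k' nk.
rewrite Lv_opp w_Lv /inc (negbTE nk) subr0 oppr_le0.
exact: ler0n.
Qed.

Lemma final_gen p :
  (forall e, 3 * (sd e ^+ 2 / 4 + 3 / 4 * (sa e ^+ 2 + 4 / N * S2 e)) <= N * S2 e /\
             N * S2 e <= 4 * (sd e ^+ 2 / 4 + 3 / 4 * (sa e ^+ 2 + 4 / N * S2 e))) ->
  3 * y_inv G p <= Kf G <= 4 * y_inv G p.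
Proof.
move=> He. rewrite y_w Kf_w !mulr_sumr; apply/andP; split; apply: ler_sum => e _;
  have [h1 h2] := He e; have hc := ltW (cc_gt0 e).
- by rewrite mulrCA [X in _ <= X]mulrCA; apply: ler_wpM2l.
- by rewrite mulrCA [X in _ <= X]mulrCA; apply: ler_wpM2l.
Qed.

End S.
Lemma ineq4 (R : realFieldType) (x y z t S2 : R) : y <= z -> z <= x -> y <= t -> t <= x ->
  x + y + z + t = 0 -> S2 = x^+2 + y^+2 + z^+2 + t^+2 ->
  3 * ((x - y)^+2 / 4 + 3 / 4 * ((x + y)^+2 + S2)) <= 4 * S2 /\
  4 * S2 <= 4 * ((x - y)^+2 / 4 + 3 / 4 * ((x + y)^+2 + S2)).
Proof.
move=> h1 h2 h3 h4 hs ->.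
have ht : t = - x - y - z by lra.
rewrite ht in h3 h4 *.
have p1 : 0 <= (x - z) * (z - y) by apply: mulr_ge0; lra.
have p2 : 0 <= (x - (-x-y-z)) * ((-x-y-z) - y) by apply: mulr_ge0; lra.
have p3 : 0 <= (3*x + y) by lra.
have p4 : 0 <= -(x + 3*y) by lra.
have p5 : 0 <= (3*x+y) * (-(x+3*y)) by apply: mulr_ge0.
have p6 : 0 <= (x+y)^+2 by apply: sqr_ge0.
have p7 : 0 <= (z - (-x-y-z))^+2 by apply: sqr_ge0.
split; nra.
Qed.

Definition o0 : 'I_4 := @Ordinal 4 0 isT.
Definition o1 : 'I_4 := @Ordinal 4 1 isT.
Definition o2 : 'I_4 := @Ordinal 4 2 isT.
Definition o3 : 'I_4 := @Ordinal 4 3 isT.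

Lemma sum4 (R : realFieldType) (f : 'I_4 -> R) : \sum_k f k = f o0 + f o1 + f o2 + f o3.
Proof.
rewrite !big_ord_recl big_ord0 addr0 /= !addrA.
by congr (f _ + f _ + f _ + f _); apply: val_inj.
Qed.

Lemma ord4 (a : 'I_4) : [\/ a = o0, a = o1, a = o2 | a = o3].
Proof.
case: a => [[|[|[|[|m]]]] Hm].
- by apply: Or41; apply: val_inj.
- by apply: Or42; apply: val_inj.
- by apply: Or43; apply: val_inj.
- by apply: Or44; apply: val_inj.
- by [].
Qed.

Ltac tryit Ha Hb HS z t := apply: (@ineq4 _ _ _ z t);
  [by apply: Hb | by apply: Ha | by apply: Hb | by apply: Ha | lra | by rewrite HS; ring].

Lemma edge4 (R : realFieldType) (v : 'I_4 -> R) (a b : 'I_4) : \sum_k v k = 0 ->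
  (forall k, v b <= v k) -> (forall k, v k <= v a) ->
  3 * ((v a - v b)^+2/4 + 3/4 * ((v a + v b)^+2 + 4/4 * \sum_k v k ^+ 2))
     <= 4 * \sum_k v k ^+ 2 /\
  4 * \sum_k v k ^+ 2 <=
     4 * ((v a - v b)^+2/4 + 3/4 * ((v a + v b)^+2 + 4/4 * \sum_k v k ^+ 2)).
Proof.
have h4 : (4 : R) != 0 by rewrite pnatr_eq0.
rewrite divff // mul1r.
move=> Hs Hb Ha.
have HS := @sum4 R (fun k => v k ^+ 2).
rewrite sum4 in Hs.
move: HS. set S2 := \sum_k _ => HS.
case: (ord4 a) => -> in Ha *; case: (ord4 b) => -> in Hb *;
  first [ tryit Ha Hb HS (v o0) (v o1) | tryit Ha Hb HS (v o0) (v o2)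
        | tryit Ha Hb HS (v o0) (v o3) | tryit Ha Hb HS (v o1) (v o2)
        | tryit Ha Hb HS (v o1) (v o3) | tryit Ha Hb HS (v o2) (v o3) | idtac ].
all: have := Ha o0; have := Ha o1; have := Ha o2; have := Ha o3;
  have := Hb o0; have := Hb o1; have := Hb o2; have := Hb o3 => ? ? ? ? ? ? ? ?.
all: have z0 : v o0 = 0 by lra.
all: have z1 : v o1 = 0 by lra.
all: have z2 : v o2 = 0 by lra.
all: have z3 : v o3 = 0 by lra.
all: rewrite HS z0 z1 z2 z3; split; nra.
Qed.

Theorem lemma3p16 (R : realFieldType) (G : mgraph R 4) :
  (forall k, 0 < elen G k) ->
  connectedb G (all_edges G) ->
  forall p : 'I_4, 3 * y_inv G p <= Kf G <= 4 * y_inv G p.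
Proof.
move=> Lpos Hc p.
have n4 : (0 < 4)%N by [].
apply: (final_gen Lpos Hc n4) => e.
have := edge4 (w_sum n4 e) (w_min Lpos Hc e) (w_max Lpos Hc e).
by rewrite /sd /sa /S2 /N.
Qed.
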